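(* Consider the boundary-driven constrained lattice gas on the two-dimensional cylinder $\Lambda = [1,L]\times \mathbb{Z}/L\mathbb{Z}$, with boundary $\partial \Lambda = \{1,L\}\times \mathbb{Z}/L\mathbb{Z}$. Set the left reservoir to $\alpha_\ell$ and the right reservoir to $\alpha_r$, i.e. $\alpha(i)=\alpha_\ell$ if $i\in\{1\}\times\mathbb{Z}/L\mathbb{Z}$ and $\alpha(i)=\alpha_r$ if $i\in\{L\}\times\mathbb{Z}/L\mathbb{Z}$. Then, for every $(i_1,i_2)\in\Lambda$, \[ \rho_a(i_1,i_2) = \alpha_\ell + (\alpha_r-\alpha_\ell)\frac{i_1}{L+1}. \]
   Context: Configurations are $\eta\in\{0,1\}^{\Lambda}$, with $\eta_i=1$ meaning site $i$ is occupied. A particle at $i$ is active if at least one neighbouring site is occupied; set $A_i=\eta_i\,\mathbf 1_{\{\sum_{j'\sim i}\eta_{j'}>0\}}$, where sites outside $\Lambda$ are treated as always occupied ($\eta\equiv1$ on $\Lambda^c$), so boundary particles are always active. The dynamics has generator $\mathscr L=\mathscr L_{bulk}+\mathscr L_{boundary}$ with $\mathscr L_{bulk}f(\eta)=\sum_{i\in\Lambda}\sum_{j\in\Lambda,\,j\sim i}A_i(1-\eta_j)\{f(\eta^{i,j})-f(\eta)\}$ ($\eta^{i,j}$: the particle at $i$ jumps to $j$), and $\mathscr L_{boundary}f(\eta)=\sum_{i\in\partial\Lambda}\big(\alpha(i)f(\eta^{i\leftarrow1})+(1-\alpha(i))f(\eta^{i\leftarrow0})-f(\eta)\big)$ (resampling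 the occupation of boundary site $i$ as a Bernoulli($\alpha(i)$) variable), where $\alpha:\partial\Lambda\to(0,1)$. Let $\pi_\alpha$ be the unique stationary measure and $\rho_a(i)=\mathbb E_{\pi_\alpha}[A_i]$ for $i\in\Lambda$. The paper's theorem shows that $\rho_a$ is discrete-harmonic in $\Lambda$, i.e. $\sum_{j\sim i}(\rho_a(j)-\rho_a(i))=0$ for all $i\in\Lambda$ (sum over neighbours $j$ in $\Lambda$ and in the mirror boundary $\{i\in\mathbb Z^d: d(i,\Lambda)=1\}$), with Dirichlet data $\rho_a(i^* )=\alpha(i)$ at the mirror site $i^*$ adjacent to boundary site $i$; the corollary follows by solving this Dirichlet problem on the cylinder (mirror sites at $i_1=0$ and $i_1=L+1$). *)

(* Defs.v *)
From HB Require Import structures.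
From mathcomp Require Import all_boot all_order all_algebra.
Set Implicit Arguments. Unset Strict Implicit. Unset Printing Implicit Defensive.
Import Order.TTheory GRing.Theory Num.Theory.
Local Open Scope ring_scope.

(* Cylinder Lambda = [1,L] x Z/LZ.  A site is a pair (a, b) : 'I_L * 'I_L
   representing (i1, i2) = (a + 1, b mod L). *)
Definition site (L : nat) := ('I_L * 'I_L)%type.

(* configurations eta in {0,1}^Lambda (true = occupied) *)
Definition config (L : nat) := {ffun site L -> bool}.

Definition adj (L : nat) (i j : site L) : bool :=
  ((val i.2 == val j.2) && (((val i.1).+1 == val j.1) || ((val j.1).+1 == val i.1)))
  || [&& val i.1 == val j.1, i.2 != j.2 &
        (((val i.2).+1 %% L)%N == val j.2) || (((val j.2).+1 %% L)%N == val i.2)].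

Definition bnd (L : nat) (i : site L) : bool :=
  (val i.1 == 0)%N || (val i.1 == L.-1)%N.

(* A_i : particle at i is active if some neighbour is occupied, sites outside
   Lambda being always occupied (a site has an outside neighbour iff it is a
   boundary site). *)
Definition active (L : nat) (eta : config L) (i : site L) : bool :=
  eta i && (bnd i || [exists j, adj i j && eta j]).

Definition swapc (L : nat) (eta : config L) (i j : site L) : config L :=
  [ffun k => if k == i then eta j else if k == j then eta i else eta k].

Definition setc (L : nat) (eta : config L) (i : site L) (b : bool) : config L :=
  [ffun k => if k == i then b else eta k].

Definition b2R {R : numDomainType} (b : bool) : R := (b : nat)%:R.

Definition generator {R : numDomainType} (L : nat) (alpha : site L -> R)
    (f : config L -> R) (eta : config L) : R :=
  \sum_(i : site L) \sum_(j : site L | adj i j)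
      b2R (active eta i) * b2R (~~ eta j) * (f (swapc eta i j) - f eta)
  + \sum_(i : site L | bnd i)
      (alpha i * f (setc eta i true) + (1 - alpha i) * f (setc eta i false) - f eta).

Definition stationary {R : numDomainType} (L : nat) (alpha : site L -> R)
    (pi : config L -> R) : Prop :=
  (forall eta, 0 <= pi eta) /\ (\sum_(eta : config L) pi eta = 1) /\
  (forall f : config L -> R, \sum_(eta : config L) pi eta * generator alpha f eta = 0).

Definition rho_a {R : numDomainType} (L : nat) (pi : config L -> R) (i : site L) : R :=
  \sum_(eta : config L) pi eta * b2R (active eta i).

Definition alpha_cyl {R : numDomainType} (L : nat) (al ar : R) (i : site L) : R :=
  if (val i.1 == 0)%N then al else ar.

(* Main.v *)
Require Import Defs.
From HB Require Import structures.
From mathcomp Require Import all_boot all_order all_algebra.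
From mathcomp Require Import zify ring lra.
Set Implicit Arguments. Unset Strict Implicit. Unset Printing Implicit Defensive.
Import Order.TTheory GRing.Theory Num.Theory.
Local Open Scope ring_scope.

Section S.
Variables (R : realFieldType) (L : nat).
Implicit Types (i j k : site L) (eta : config L).

Lemma b2RT : b2R true = 1 :> R. Proof. by rewrite /b2R. Qed.
Lemma b2RF : b2R false = 0 :> R. Proof. by rewrite /b2R. Qed.

Lemma adjC i j : adj i j = adj j i.
Proof.
rewrite /adj (eq_sym (val i.2)) (eq_sym (val i.1)) (eq_sym i.2).
by rewrite (orbC ((val i.1).+1 == _)) (orbC (((val i.2).+1 %% L)%N == _)).
Qed.

Lemma adj_neq i j : adj i j -> i != j.
Proof.
move=> h; apply/eqP => e; subst; move: h; rewrite /adj eqxx /=.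
by rewrite eqxx /= ?andbF ?orbF orbb eqxx /= orbF => /eqP; lia.
Qed.

Lemma activeE eta i : active eta i -> eta i.
Proof. by case/andP. Qed.

Lemma cur eta j k : adj k j ->
  b2R (active eta j) * b2R (~~ eta k) - b2R (active eta k) * b2R (~~ eta j)
  = b2R (active eta j) - b2R (active eta k) :> R.
Proof.
move=> hkj.
have hj : eta k -> active eta j = eta j.
  move=> ek; rewrite /active; case: (eta j) => //=; apply/orP; right.
  by apply/existsP; exists k; rewrite -adjC hkj ek.
have hk : eta j -> active eta k = eta k.
  move=> ej; rewrite /active; case: (eta k) => //=; apply/orP; right.
  by apply/existsP; exists j; rewrite hkj ej.
have aj := @activeE eta j; have ak := @activeE eta k.
move: hj hk aj ak.
case: (active eta j); case: (active eta k); case: (eta j); case: (eta k);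
  move=> h1 h2 h3 h4; rewrite /= ?b2RT ?b2RF;
  try (by have := h1 erefl); try (by have := h2 erefl);
  try (by have := h3 erefl); try (by have := h4 erefl); ring.
Qed.


Lemma step eta i j k : adj i j ->
  b2R (active eta i) * b2R (~~ eta j) * (b2R (swapc eta i j k) - b2R (eta k))
  = (if j == k then b2R (active eta i) * b2R (~~ eta j) else 0)
    - (if i == k then b2R (active eta i) * b2R (~~ eta j) else 0) :> R.
Proof.
move=> hij; have nij := adj_neq hij.
rewrite /swapc ffunE.
have ai := @activeE eta i.
case: (eqVneq k i) => [->|ki].
  rewrite (eq_sym j i) (negbTE nij) sub0r.
  move: ai; case: (active eta i); case: (eta i); case: (eta j) => h;
   rewrite /= ?b2RT ?b2RF; try (by have := h erefl); ring.
rewrite subr0.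
case: (eqVneq k j) => [->|kj]; last by rewrite subrr mulr0.
rewrite ?eqxx.
move: ai; case: (active eta i); case: (eta i); case: (eta j) => h;
   rewrite /= ?b2RT ?b2RF; try (by have := h erefl); ring.
Qed.

Lemma gen_pt (alpha : site L -> R) k eta :
  generator alpha (fun e => b2R (e k)) eta =
  \sum_(j | adj k j) (b2R (active eta j) - b2R (active eta k))
  + b2R (bnd k) * (alpha k - b2R (active eta k)).
Proof.
rewrite /generator; congr (_ + _).
  under eq_bigr => i _ do under eq_bigr => j hij do rewrite step //.
  under eq_bigr => i _ do rewrite sumrB.
  rewrite sumrB.
  have A : forall i, \sum_(j | adj i j) (if j == k then b2R (active eta i) * b2R (~~ eta j) else 0)
     = if adj i k then b2R (active eta i) * b2R (~~ eta k) else 0 :> R.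
    move=> i; rewrite -big_mkcondr; case: ifP => hik.
      by apply: big_pred1 => j /=; case: eqP => [->|]; rewrite ?hik ?andbF.
    by apply: big_pred0 => j /=; case: eqP => [->|]; rewrite ?hik ?andbF.
  under eq_bigr do rewrite A.
  rewrite -big_mkcond /= (eq_bigl (adj k)); last by move=> j; rewrite adjC.
  rewrite [X in _ - X](bigD1 k) //=.
  rewrite [X in _ - (_ + X)]big1 ?addr0; last first.
    by move=> i ik; apply: big1 => j _; rewrite (negbTE ik).
  under [X in _ - X = _]eq_bigr do rewrite eqxx.
  rewrite -sumrB; apply: eq_bigr => j hkj; exact: cur.
under eq_bigr => i _ do rewrite /setc !ffunE.
have E : forall i, alpha i * b2R (if k == i then true else eta k)
  + (1 - alpha i) * b2R (if k == i then false else eta k) - b2R (eta k)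
  = if i == k then alpha i - b2R (eta k) else 0.
  move=> i; rewrite (eq_sym i); case: ifP => _; rewrite ?b2RT ?b2RF; ring.
under eq_bigr do rewrite E.
case hb: (bnd k).
  rewrite (bigD1 k) //= eqxx big1 ?addr0; last by move=> i /andP [_ /negbTE ->].
  by rewrite b2RT mul1r /active hb /= andbT.
rewrite b2RF mul0r big1 // => i hi; case: eqP => // e; by move: hi; rewrite e hb.
Qed.

Lemma eqn_rho (alpha : site L -> R) pi k : stationary alpha pi ->
  \sum_(j | adj k j) (rho_a pi j - rho_a pi k)
  + b2R (bnd k) * (alpha k - rho_a pi k) = 0.
Proof.
case=> _ [h1 h]; rewrite -[RHS](h (fun e => b2R (e k))).
under [RHS]eq_bigr do rewrite gen_pt mulrDr mulr_sumr.
rewrite [RHS]big_split /=; congr (_ + _).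
  rewrite exchange_big /=; apply: eq_bigr => j _.
  by rewrite /rho_a -sumrB; apply: eq_bigr => eta _; rewrite mulrBr.
rewrite [X in _ * (X - rho_a _ _)](_ : alpha k = \sum_eta pi eta * alpha k); last first.
  by rewrite -mulr_suml h1 mul1r.
rewrite /rho_a -sumrB mulr_sumr; apply: eq_bigr => eta _; ring.
Qed.

Lemma maxp (g : site L -> R) :
  (forall k, \sum_(j | adj k j) (g j - g k) = b2R (bnd k) * g k) ->
  forall k, g k <= 0.
Proof.
move=> H k0.
have [m mmax] : exists m, forall k, g k <= g m.
  case: (@arg_maxP _ R _ k0 xpredT g erefl) => m _ hm.
  by exists m => k; apply: hm.
rewrite leNgt; apply/negP => gk0.
have M0 : 0 < g m by apply: lt_le_trans (mmax k0).
have key : forall k, g k = g m -> ~~ bnd k /\ forall j, adj k j -> g j = g m.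
  move=> k hk.
  have s0 : \sum_(j | adj k j) (g j - g k) = 0.
    apply/eqP; rewrite eq_le; apply/andP; split.
      by apply: sumr_le0 => j _; rewrite subr_le0 hk; exact: mmax.
    rewrite H hk; case: (bnd k); rewrite ?b2RT ?b2RF; lra.
  have s2 : \sum_(j | adj k j) (g k - g j) = 0.
    have -> : \sum_(j | adj k j) (g k - g j) = - \sum_(j | adj k j) (g j - g k).
      by rewrite -sumrN; apply: eq_bigr => j _; rewrite opprB.
    by rewrite s0 oppr0.
  split.
    apply/negP => hb; move: (H k); rewrite s0 hb b2RT hk; lra.
  have nn : forall i, adj k i -> 0 <= g k - g i.
    by move=> i _; rewrite hk subr_ge0 mmax.
  move=> j hj; have := psumr_eq0P nn s2 hj; lra.
suff : forall a k, val k.1 = a -> g k = g m -> False by move/(_ _ m erefl erefl).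
elim=> [|a IH] k hk gk.
  by case: (key k gk) => /negP; rewrite /bnd hk.
have ha : (a < L)%N by move: (ltn_ord k.1); rewrite hk; exact: ltnW.
apply: (IH (Ordinal ha, k.2) erefl).
apply: (key k gk).2.
by rewrite /adj /= eqxx hk eqxx orbT.
Qed.

Lemma sum_ind_f m (F : nat -> R) :
  \sum_(j : 'I_L) (if nat_of_ord j == m then F (nat_of_ord j) else 0) = if (m < L)%N then F m else 0.
Proof.
case: ltnP => hm.
  rewrite (bigD1 (Ordinal hm)) //= eqxx big1 ?addr0 // => j hj.
  case: eqP => // e; move: hj; have -> : j = Ordinal hm by apply: val_inj.
  by rewrite eqxx.
apply: big1 => j _; case: eqP => // e; exfalso.
have := ltn_ord j; have : nat_of_ord j = m by []. lia.
Qed.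

Lemma horiz_sum k (h : nat -> R) :
  \sum_(j | adj k j) (h (val j.1) - h (val k.1)) =
  \sum_(j1 : 'I_L) ((if val j1 == (val k.1).+1 then h (val j1) - h (val k.1) else 0)
                  + (if (val j1).+1 == val k.1 then h (val j1) - h (val k.1) else 0)).
Proof.
transitivity (\sum_(j1 : 'I_L) \sum_(j2 : 'I_L)
   (if adj k (j1, j2) then h j1 - h (val k.1) else 0)).
  by rewrite pair_bigA big_mkcond; apply: eq_bigr => -[a b].
apply: eq_bigr => j1 _.
rewrite (bigD1 k.2) //= big1 ?addr0; last first.
  move=> j2 hj2; rewrite /adj /=.
  have -> : (val k.2 == val j2) = false by apply/negbTE; rewrite eq_sym.
  rewrite /=; case: ifP => //; case/and3P => /eqP -> _ _; by rewrite subrr.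
rewrite /adj /= eqxx /= eqxx /= andbF orbF (eq_sym (nat_of_ord k.1).+1).
case: eqP => e1; case: eqP => e2 /=.
- exfalso; lia.
- by rewrite addr0.
- by rewrite add0r.
- by rewrite addr0.
Qed.

Definition phi (al ar : R) (k : site L) : R :=
  al + (ar - al) * ((val k.1).+1)%:R / (L.+1)%:R.

Lemma eqn_phi (al ar : R) k : (2 <= L)%N ->
  \sum_(j | adj k j) (phi al ar j - phi al ar k)
  + b2R (bnd k) * (alpha_cyl al ar k - phi al ar k) = 0.
Proof.
move=> hL.
pose h (n : nat) : R := al + (ar - al) * (n.+1)%:R / (L.+1)%:R.
have := horiz_sum k h; rewrite /phi -/(h _) => ->.
under eq_bigr do rewrite -/(h _).
rewrite big_split /= (sum_ind_f _ (fun n => h n - h (nat_of_ord k.1))).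
rewrite /bnd /alpha_cyl -/(h _).
rewrite -[val k.1]/(nat_of_ord k.1).
move: (nat_of_ord k.1) (ltn_ord k.1) => a ha.
have L0 : (L.+1)%:R != 0 :> R by rewrite pnatr_eq0.
case: a ha => [|a] ha /=.
  rewrite big1; last by move=> j _.
  rewrite (_ : (1 < L)%N = true) ?hL //.
  rewrite b2RT /h; field; by rewrite addrC natr1.
rewrite (eq_bigr (fun j : 'I_L => if nat_of_ord j == a then h (nat_of_ord j) - h a.+1 else 0)); last first.
  by move=> j _; rewrite eqSS.
rewrite (sum_ind_f _ (fun n => h n - h a.+1)) (_ : (a < L)%N = true); last by lia.
case: (ltnP a.+2 L) => h2.
  rewrite (_ : (a.+1 == L.-1) = false); last by apply/eqP; lia.
  rewrite b2RF mul0r addr0 /h; field; by rewrite addrC natr1.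
have EL : L = a.+2 by lia.
rewrite (_ : (a.+1 == L.-1) = true); last by apply/eqP; lia.
rewrite b2RT /h; move: L0; rewrite EL => L0.
rewrite -!natr1; field; by rewrite !natr1.
Qed.
End S.

Theorem mainTheorem1 (R : realFieldType) (L : nat) (hL : (2 <= L)%N)
    (al ar : R) (hal : 0 < al < 1) (har : 0 < ar < 1)
    (pi : config L -> R) (hpi : stationary (@alpha_cyl R L al ar) pi)
    (i : site L) :
  rho_a pi i = al + (ar - al) * ((val i.1).+1)%:R / (L.+1)%:R.
Proof.
pose g := fun k => rho_a pi k - phi al ar k.
have Hg : forall k, \sum_(j | adj k j) (g j - g k) = b2R (bnd k) * g k.
  move=> k; have e1 := eqn_rho k hpi; have e2 := eqn_phi al ar k hL.
  have -> : \sum_(j | adj k j) (g j - g k) =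
     \sum_(j | adj k j) (rho_a pi j - rho_a pi k) - \sum_(j | adj k j) (phi al ar j - phi al ar k).
    by rewrite -sumrB; apply: eq_bigr => j _; rewrite /g; ring.
  have eA : \sum_(j | adj k j) (rho_a pi j - rho_a pi k) = - (b2R (bnd k) * (alpha_cyl al ar k - rho_a pi k)).
    by apply/eqP; rewrite -addr_eq0; apply/eqP.
  have eB : \sum_(j | adj k j) (phi al ar j - phi al ar k) = - (b2R (bnd k) * (alpha_cyl al ar k - phi al ar k)).
    by apply/eqP; rewrite -addr_eq0; apply/eqP.
  rewrite eA eB /g; ring.
have Hg' : forall k, \sum_(j | adj k j) ((fun k => - g k) j - (fun k => - g k) k) = b2R (bnd k) * (fun k => - g k) k.
  move=> k /=; rewrite mulrN -Hg -sumrN; apply: eq_bigr => j _; ring.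
have h1 := maxp Hg i; have h2 := maxp Hg' i.
have : g i = 0 by move: h2 => /=; lra.
by rewrite /g /phi => /eqP; rewrite subr_eq0 => /eqP.
Qed.
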